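(* Let $k\geq 2$, $m\geq 3$, and $n\in\mathbb{N}$. There is no $[n,k]_2$ classical code $C$ with encoding function $\mathrm{Enc}:\mathbb{F}_{2^k}\to\mathbb{F}_2^n$ such that the collection $(C^{(h)};\mathrm{Enc}^{(h)})_{h\in[m]}$ with $(C^{(h)};\mathrm{Enc}^{(h)})=(C;\mathrm{Enc})$ for every $h\in[m]$ is $m$-multiplication-friendly.
   Context: $x*y$ is the componentwise product. An encoding function of an $[n,k]_q$ classical (linear) code $C\subseteq\mathbb{F}_q^n$ is an $\mathbb{F}_q$-linear isomorphism $\mathrm{Enc}:\mathbb{F}_{q^k}\to C$. A collection $(C^{(h)};\mathrm{Enc}^{(h)})_{h\in[m]}$ of $[n,k]_q$ codes is $m$-multiplication-friendly if there is an $\mathbb{F}_q$-linear $\mathrm{Dec}:\mathbb{F}_q^n\to\mathbb{F}_{q^k}$ with $z_1\cdots z_m=\mathrm{Dec}(\mathrm{Enc}^{(1)}(z_1)*\cdots*\mathrm{Enc}^{(m)}(z_m))$ for all $z_1,\dots,z_m\in\mathbb{F}_{q^k}$. *)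

(* Defs.v *)
From HB Require Import structures.
From mathcomp Require Import all_boot all_order all_algebra all_field.
Set Implicit Arguments. Unset Strict Implicit. Unset Printing Implicit Defensive.
Import GRing.Theory.
Local Open Scope ring_scope.

Notation F2 := ('F_2 : finFieldType).

(* Scalar action of F_2 on a field L of characteristic 2 (the F_2-vector-space
   structure of F_{2^k}): a . x := (a as 0/1)%:R * x. *)
Definition F2scale (L : fieldType) (a : F2) (x : L) : L := (nat_of_ord a)%:R * x.

Definition F2linear_enc (L : fieldType) (n : nat) (f : L -> 'rV[F2]_n) : Prop :=
  forall (a : F2) (x y : L), f (F2scale a x + y) = a *: f x + f y.
Definition F2linear_dec (L : fieldType) (n : nat) (f : 'rV[F2]_n -> L) : Prop :=
  forall (a : F2) (v w : 'rV[F2]_n), f (a *: v + w) = F2scale a (f v) + f w.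

Definition cwprod (n m : nat) (x : 'I_m -> 'rV[F2]_n) : 'rV[F2]_n :=
  \row_(i < n) \prod_(h < m) x h 0 i.

(* (C;Enc) is an [n,k]_2 code with encoding Enc : L ~= C = image Enc
   (an injective F_2-linear map), and the m-fold collection of copies of it
   is m-multiplication-friendly. *)
Definition mult_friendly_self (L : fieldType) (n m : nat)
  (Enc : L -> 'rV[F2]_n) : Prop :=
  exists Dec : 'rV[F2]_n -> L, F2linear_dec Dec /\
    forall z : 'I_m -> L,
      \prod_(h < m) z h = Dec (cwprod (fun h => Enc (z h))).

(* Main.v *)
Require Import Defs.
From mathcomp Require Import all_boot all_order all_algebra all_field.
Import GRing.Theory.
Local Open Scope ring_scope.

Lemma F2_idem (a : F2) : a * a = a.
Proof. by case: a => [[|[|]]] //= ?; apply/val_inj. Qed.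

Lemma prod_trick (m' : nat) (a b : F2) :
  \prod_(h < m'.+3) (if (h < 2)%N then a else b) =
  \prod_(h < m'.+3) (if (val h == 0)%N then a else b).
Proof.
rewrite !big_ord_recl /=.
by rewrite !mulrA F2_idem -[a * b * b]mulrA F2_idem.
Qed.

Theorem mainTheorem9 (k m n : nat) (hk : (2 <= k)%N) (hm : (3 <= m)%N)
  (L : finFieldType) (hL : #|L| = (2 ^ k)%N) :
  ~ exists Enc : L -> 'rV[F2]_n,
      [/\ F2linear_enc Enc, injective Enc & mult_friendly_self m Enc].
Proof.
case=> Enc [_ _ [Dec [_ HD]]].
case: m hm HD => [|[|[|m']]] // _ HD.
have idem : forall x : L, x * x = x.
  move=> x.
  have H1 := HD (fun h => if (h < 2)%N then x else 1).
  have H2 := HD (fun h => if (val h == 0)%N then x else 1).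
  have P1 : \prod_(h < m'.+3) (if (h < 2)%N then x else 1) = x * x.
    by rewrite !big_ord_recl big1 ?mulr1 // => i _; rewrite /= /bump.
  have P2 : \prod_(h < m'.+3) (if (val h == 0)%N then x else 1) = x.
    by rewrite !big_ord_recl big1 ?mulr1 // => i _; rewrite /= /bump.
  rewrite -P1 H1 -{2}P2 H2; congr Dec.
  apply/rowP => i; rewrite !mxE.
  have F1 : forall h : 'I_m'.+3, Enc (if (h < 2)%N then x else 1) 0 i =
     if (h < 2)%N then Enc x 0 i else Enc 1 0 i by move=> h; case: ifP.
  have F2' : forall h : 'I_m'.+3, Enc (if (val h == 0)%N then x else 1) 0 i =
     if (val h == 0)%N then Enc x 0 i else Enc 1 0 i by move=> h; case: ifP.
  rewrite (eq_bigr _ (fun h _ => F1 h)) (eq_bigr _ (fun h _ => F2' h)).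
  exact: prod_trick.
have sub : (L : {pred L}) \subset [set 0; 1].
  apply/subsetP => x _; rewrite !inE.
  have : x * (x - 1) == 0 by rewrite mulrBr mulr1 idem subrr.
  by rewrite mulf_eq0 subr_eq0.
have := subset_leq_card sub.
rewrite hL cards2.
case: k hk {hL} => [|[|k]] // _.
have h4 : (4 <= 2 ^ k.+2)%N by rewrite !expnS mulnA leq_pmulr // expn_gt0.
by case: (_ != _) => /= H; have := leq_trans h4 H.
Qed.
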